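(* Let $A\in\mathbb{R}^{m\times n}$ with $\delta_{2k}<1$, let $x\in\mathbb{R}^n$, $\eta\in\mathbb{R}^m$, $y=Ax+\eta$, $S=\mathcal{L}_k(x)$ and $\eta'=Ax_{\overline S}+\eta$. Let $u\in\mathbb{R}^n$ be arbitrary, let $$w\in\arg\min_{w'}\{\|y-A(u\otimes w')\|_2^2:\ \mathbf e^Tw'=k,\ 0\le w'\le\mathbf e\},$$ and let $S'=\operatorname{supp}(\mathcal{H}_k(u\otimes w))$. Let $\hat w\in\{0,1\}^n$ be a $k$-sparse binary vector with $S\subseteq\operatorname{supp}(\hat w)$. Then (i) $$\|(x_S-u\otimes w)_{S\cup S'}\|_2\le\sqrt{\frac{1+\delta_k}{1-\delta_{2k}}}\|(x_S-u)\otimes\hat w\|_2+\frac{2}{\sqrt{1-\delta_{2k}}}\|\eta'\|_2+\frac{1}{\sqrt{1-\delta_{2k}}}\left\|A\left[(x_S-u\otimes w)_{\overline{S\cup S'}}\right]\right\|_2;$$ (ii) $$\left\|A\left[(x_S-u\otimes w)_{\overline{S\cup S'}}\right]\right\|_2\le2\sqrt{1+\delta_k}\,\|\mathcal{H}_k(u-x_S)\|_2 .$$ (In the paper, $u=u^p$ and $w=w^p$ are the iterates of the NTROT algorithm and $S'=\operatorname{supp}(x^{p+1})$.)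
   Context: Notation: $\|\cdot\|_2$ is the Euclidean norm; a vector is $k$-sparse if it has at most $k$ nonzero entries. For $\Omega\subseteq\{1,\dots,n\}$, $\overline\Omega$ is its complement and $x_\Omega$ is the vector obtained from $x$ by keeping the entries indexed by $\Omega$ and setting the others to zero. $\mathcal{L}_k(u)$ denotes the index set of the $k$ largest magnitudes of $u$ (ties broken arbitrarily), and $\mathcal{H}_k(u)=u_{\mathcal{L}_k(u)}$ is the hard thresholding operator (keeps the $k$ largest magnitudes, zeroes the rest). $u\otimes w$ is the entrywise (Hadamard) product; $\mathbf e=(1,\dots,1)^T$; inequalities between vectors are entrywise. The $q$-th order restricted isometry constant $\delta_q$ of $A$ is the smallest $\delta\ge0$ such that $(1-\delta)\|z\|_2^2\le\|Az\|_2^2\le(1+\delta)\|z\|_2^2$ for all $q$-sparse $z\in\mathbb{R}^n$. *)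

(* Defs.v *)
From mathcomp Require Import all_boot all_order all_algebra reals.
Set Implicit Arguments. Unset Strict Implicit. Unset Printing Implicit Defensive.
Import Order.TTheory GRing.Theory Num.Theory.
Local Open Scope ring_scope.

Section Defs.
Variable R : realType.

Definition sqnorm n (z : 'cV[R]_n) : R := \sum_(i < n) (z i 0) ^+ 2.
Definition norm2 n (z : 'cV[R]_n) : R := Num.sqrt (sqnorm z).

Definition supp n (z : 'cV[R]_n) : {set 'I_n} := [set i | z i 0 != 0].

Definition sparse n (k : nat) (z : 'cV[R]_n) : Prop := (#|supp z| <= k)%N.

Definition restr n (z : 'cV[R]_n) (O : {set 'I_n}) : 'cV[R]_n :=
  \col_i (if i \in O then z i 0 else 0).

Definition hadam n (u w : 'cV[R]_n) : 'cV[R]_n := \col_i (u i 0 * w i 0).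

(* T is a valid choice of L_k(u): an index set of the k largest magnitudes of u
   (ties broken arbitrarily; if k > n it is all indices). *)
Definition is_Lk n (k : nat) (u : 'cV[R]_n) (T : {set 'I_n}) : Prop :=
  #|T| = minn k n /\ forall i j, i \in T -> j \notin T -> `|u j 0| <= `|u i 0|.

Definition Hk n (u : 'cV[R]_n) (T : {set 'I_n}) : 'cV[R]_n := restr u T.

Definition RIP m n (A : 'M[R]_(m, n)) (q : nat) (d : R) : Prop :=
  0 <= d /\ forall z : 'cV[R]_n, sparse q z ->
    (1 - d) * sqnorm z <= sqnorm (A *m z) <= (1 + d) * sqnorm z.

Definition is_RIC m n (A : 'M[R]_(m, n)) (q : nat) (d : R) : Prop :=
  RIP A q d /\ forall d', RIP A q d' -> d <= d'.

Definition feasible n (k : nat) (w : 'cV[R]_n) : Prop :=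
  \sum_(i < n) w i 0 = k%:R /\ forall i, 0 <= w i 0 <= 1.

Definition is_argmin m n (A : 'M[R]_(m, n)) (y : 'cV[R]_m) (u : 'cV[R]_n)
  (k : nat) (w : 'cV[R]_n) : Prop :=
  feasible k w /\ forall w', feasible k w' ->
    sqnorm (y - A *m hadam u w) <= sqnorm (y - A *m hadam u w').

End Defs.

(* Main.v *)
Require Import Defs.
From mathcomp Require Import all_boot all_order all_algebra reals.
From mathcomp Require Import ring lra zify.
Import Order.TTheory GRing.Theory Num.Theory.
Local Open Scope ring_scope.
Set Implicit Arguments. Unset Strict Implicit.

Definition dot {R : realType} {n} (a b : 'cV[R]_n) : R := \sum_(i < n) a i 0 * b i 0.

Lemma sqnorm_ge0 (R : realType) n (z : 'cV[R]_n) : 0 <= sqnorm z.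
Proof. by apply: sumr_ge0 => i _; rewrite sqr_ge0. Qed.

Lemma norm2_ge0 (R : realType) n (z : 'cV[R]_n) : 0 <= norm2 z.
Proof. exact: sqrtr_ge0. Qed.

Lemma dot_sq (R : realType) n (z : 'cV[R]_n) : dot z z = sqnorm z.
Proof. by apply: eq_bigr => i _; rewrite expr2. Qed.

Lemma CS2 (R : realType) n (a b : 'cV[R]_n) : dot a b ^+ 2 <= sqnorm a * sqnorm b.
Proof.
set A := sqnorm a; set B := sqnorm b; set C := dot a b.
have A0 : 0 <= A by exact: sqnorm_ge0.
have B0 : 0 <= B by exact: sqnorm_ge0.
have E : \sum_(i < n) (a i 0 * B - C * b i 0) ^+ 2 = B * (A * B - C ^+ 2).
  have e : forall i, (a i 0 * B - C * b i 0) ^+ 2 =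
     a i 0 ^+ 2 * B ^+ 2 - (a i 0 * b i 0) * (2 * B * C) + b i 0 ^+ 2 * C ^+ 2.
    by move=> i; ring.
  under eq_bigr => i _ do rewrite e.
  rewrite big_split sumrB /= -!mulr_suml -/A -/B -/C.
  have -> : \sum_(i < n) b i 0 ^+ 2 = B by [].
  have -> : \sum_(i < n) a i 0 ^+ 2 = A by [].
  have -> : \sum_(i < n) a i 0 * b i 0 = C by [].
  ring.
have P : 0 <= B * (A * B - C ^+ 2) by rewrite -E; apply: sumr_ge0 => i _; rewrite sqr_ge0.
have [Bz|Bp] := eqVneq B 0.
  have bz : forall i, b i 0 = 0.
    move=> i; apply/eqP; rewrite -sqrf_eq0.
    have := Bz; rewrite /B /sqnorm => /eqP; rewrite psumr_eq0; last by move=> j _; rewrite sqr_ge0.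
    by move/allP => /(_ i (mem_index_enum _)).
  have -> : C = 0 by rewrite /C /dot big1 // => i _; rewrite bz mulr0.
  by rewrite Bz expr0n /= mulr0.
have Bpos : 0 < B by rewrite lt_def Bp B0.
by move: P; rewrite pmulr_rge0 // subr_ge0 mulrC.
Qed.

Lemma CS (R : realType) n (a b : 'cV[R]_n) : dot a b <= norm2 a * norm2 b.
Proof.
apply: le_trans (ler_norm _) _.
rewrite -sqrtr_sqr /norm2 -sqrtrM ?sqnorm_ge0 //.
by rewrite ler_sqrt ?CS2 // mulr_ge0 ?sqnorm_ge0.
Qed.

Lemma sqnormD (R : realType) n (a b : 'cV[R]_n) :
  sqnorm (a + b) = sqnorm a + 2 * dot a b + sqnorm b.
Proof.
rewrite /sqnorm /dot mulr_sumr -!big_split /=; apply: eq_bigr => i _.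
rewrite !mxE; ring.
Qed.

Lemma norm2_sq (R : realType) n (a : 'cV[R]_n) : norm2 a ^+ 2 = sqnorm a.
Proof. by rewrite sqr_sqrtr // sqnorm_ge0. Qed.

Lemma norm2D (R : realType) n (a b : 'cV[R]_n) : norm2 (a + b) <= norm2 a + norm2 b.
Proof.
rewrite -(ger0_norm (addr_ge0 (norm2_ge0 a) (norm2_ge0 b))) -sqrtr_sqr.
rewrite /norm2 ler_sqrt ?sqr_ge0 // sqnormD.
have := CS a b; rewrite /norm2.
have := sqr_sqrtr (sqnorm_ge0 a); have := sqr_sqrtr (sqnorm_ge0 b).
move: (sqrtr_ge0 (sqnorm a)) (sqrtr_ge0 (sqnorm b)).
set x := Num.sqrt _; set y := Num.sqrt _; nra.
Qed.

Lemma sqnormN (R : realType) n (a : 'cV[R]_n) : sqnorm (- a) = sqnorm a.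
Proof. by apply: eq_bigr => i _; rewrite !mxE sqrrN. Qed.

Lemma norm2N (R : realType) n (a : 'cV[R]_n) : norm2 (- a) = norm2 a.
Proof. by rewrite /norm2 sqnormN. Qed.

Lemma le_norm2 (R : realType) n p (a : 'cV[R]_n) (b : 'cV[R]_p) c :
  0 <= c -> sqnorm a <= c * sqnorm b -> norm2 a <= Num.sqrt c * norm2 b.
Proof. by move=> c0 h; rewrite /norm2 -sqrtrM // ler_sqrt // mulr_ge0 ?sqnorm_ge0. Qed.

Lemma ge_norm2 (R : realType) n p (a : 'cV[R]_n) (b : 'cV[R]_p) c :
  0 <= c -> c * sqnorm b <= sqnorm a -> Num.sqrt c * norm2 b <= norm2 a.
Proof. by move=> c0 h; rewrite /norm2 -sqrtrM // ler_sqrt ?sqnorm_ge0. Qed.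

Lemma le_norm2' (R : realType) n p (a : 'cV[R]_n) (b : 'cV[R]_p) :
  sqnorm a <= sqnorm b -> norm2 a <= norm2 b.
Proof. by move=> h; rewrite /norm2 ler_sqrt ?sqnorm_ge0. Qed.

Lemma sqnorm_restr (R : realType) n (v : 'cV[R]_n) (B : {set 'I_n}) :
  sqnorm (restr v B) = \sum_(i in B) v i 0 ^+ 2.
Proof.
rewrite /sqnorm [RHS]big_mkcond /=; apply: eq_bigr => i _; rewrite mxE.
by case: (i \in B) => //; rewrite expr0n.
Qed.

Lemma topk (R : realType) n (v : 'cV[R]_n) (T B : {set 'I_n}) :
  (#|B| <= #|T|)%N ->
  (forall i j, i \in T -> j \notin T -> `|v j 0| <= `|v i 0|) ->
  \sum_(i in B) v i 0 ^+ 2 <= \sum_(i in T) v i 0 ^+ 2.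
Proof.
move=> hc hT.
rewrite (big_setID T) (big_setID B (A := T)) /= setIC lerD2l.
set F := fun i : 'I_n => v i 0 ^+ 2.
have F0 : forall i, 0 <= F i by move=> i; rewrite /F sqr_ge0.
have hc' : (#|B :\: T| <= #|T :\: B|)%N.
  move: hc; rewrite -(cardsID T B) -(cardsID B T) setIC; lia.
have [TB0|[j0 Hj0]] := set_0Vmem (T :\: B).
  have : #|B :\: T| = 0%N by move: hc'; rewrite TB0 cards0; lia.
  move/eqP; rewrite cards_eq0 => /eqP ->; rewrite big_set0.
  by apply: sumr_ge0 => i _; apply: sqr_ge0.
case: (arg_minP F Hj0) => i0 Hi0 Hmin.
apply: (@le_trans _ _ (\sum_(i in B :\: T) F i0)).
  apply: ler_sum => j /setDP [jB jT].
  move: Hi0 => /setDP [i0T i0B].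
  have := hT i0 j i0T jT.
  rewrite /F -(real_normK (num_real (v j 0))) -(real_normK (num_real (v i0 0))) !expr2 => h.
  by apply: ler_pM => //; apply: normr_ge0.
apply: (@le_trans _ _ (\sum_(i in T :\: B) F i0)).
  by rewrite !sumr_const; apply: ler_wpMn2l; [apply: F0 | ].
by apply: ler_sum => j Hj; apply: Hmin.
Qed.
Lemma linopt (R : realType) (I : finType) (a w : I -> R) (D : {set I}) (k : nat) :
  (forall i, 0 <= w i <= 1) -> \sum_(i in D) w i <= k%:R ->
  exists B : {set I}, [/\ B \subset D, (#|B| <= k)%N &
     \sum_(i in D) a i * w i <= \sum_(i in B) a i].
Proof.
move=> hw hs.
pose P := fun B : {set I} => (B \subset D) && (#|B| <= k)%N.
have P0 : P set0 by rewrite /P sub0set cards0.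
case: (@arg_maxP _ _ _ set0 P (fun B : {set I} => \sum_(i in B) a i) P0) => B0 /andP [B0D B0k] Hmax.
exists B0; split => //.
have h1 : forall i, i \in B0 -> 0 <= a i.
  move=> i iB.
  have PC : P (B0 :\ i).
    rewrite /P (subset_trans (subsetDl _ _) B0D) /=.
    by apply: leq_trans B0k; apply: subset_leq_card; apply: subsetDl.
  have := Hmax _ PC; rewrite /= (big_setD1 _ iB) /=; lra.
have h2 : forall i j, i \in B0 -> j \in D -> j \notin B0 -> a j <= a i.
  move=> i j iB jD jB.
  have jB' : j \notin B0 :\ i by rewrite inE negb_and jB orbT.
  have PC : P (j |: (B0 :\ i)).
    rewrite /P subUset sub1set jD (subset_trans (subsetDl _ _) B0D) /=.
    rewrite cardsU1 jB' /=; move: B0k; rewrite (cardsD1 i B0) iB /=; lia.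
  have := Hmax _ PC; rewrite /= (big_setU1 _ jB') (big_setD1 _ iB) /=; lra.
have h3 : (#|B0| < k)%N -> forall j, j \in D -> j \notin B0 -> a j <= 0.
  move=> lt j jD jB.
  have PC : P (j |: B0).
    by rewrite /P subUset sub1set jD B0D /= cardsU1 jB /=; lia.
  have := Hmax _ PC; rewrite /= (big_setU1 _ jB) /=; lra.
rewrite (big_setID B0) /= (setIidPr B0D).
have [lt|ge] := ltnP #|B0| k.
  rewrite -[X in _ <= X]addr0; apply: lerD.
    apply: ler_sum => i iB; have := h1 i iB; have := hw i; case/andP => w0 w1 ha.
    by rewrite ler_piMr.
  apply: sumr_le0 => j /setDP [jD jB].
  have := h3 lt j jD jB; have := hw j; case/andP => w0 w1 ha.
  by rewrite mulr_le0_ge0.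
have eqk : #|B0| = k by apply/eqP; rewrite eqn_leq B0k ge.
pose tau := \big[Order.max/0]_(j in D :\: B0) a j.
have t0 : 0 <= tau by move: (lexx tau) => /bigmax_leP [].
have ta : forall i, i \in B0 -> tau <= a i.
  move=> i iB; apply: bigmax_le; first exact: h1.
  by move=> j /setDP [jD jB]; apply: h2.
have at_ : forall j, j \in D :\: B0 -> a j <= tau.
  by move=> j hj; apply: le_bigmax_cond.
have s1 : \sum_(i in D :\: B0) a i * w i <= tau * \sum_(i in D :\: B0) w i.
  rewrite mulr_sumr; apply: ler_sum => j hj.
  have := at_ j hj; have := hw j; case/andP => w0 w1 ha; nra.
have s2 : \sum_(i in D :\: B0) w i <= \sum_(i in B0) (1 - w i).
  move: hs; rewrite (big_setID B0) /= (setIidPr B0D) sumrB sumr_const -eqk.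
  rewrite [_ *+ _]mulr1n => hs; lra.
have s3 : \sum_(i in B0) a i * w i + tau * \sum_(i in B0) (1 - w i) <= \sum_(i in B0) a i.
  rewrite mulr_sumr -big_split /=; apply: ler_sum => i iB.
  have := ta i iB; have := hw i; case/andP => w0 w1 ha; nra.
have := ler_wpM2l t0 s2; lra.
Qed.
Lemma restr_split (R : realType) n (x : 'cV[R]_n) O : restr x O + restr x (~: O) = x.
Proof.
apply/matrixP => i j; rewrite (ord1 j) !mxE inE.
by case: (i \in O); rewrite ?addr0 ?add0r.
Qed.

Lemma supp_restr (R : realType) n (x : 'cV[R]_n) O : supp (restr x O) \subset O.
Proof.
apply/subsetP => i; rewrite inE mxE; by case: (i \in O); rewrite ?eqxx.
Qed.

Lemma supp_hadam (R : realType) n (a b : 'cV[R]_n) : supp (hadam a b) \subset supp b.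
Proof.
apply/subsetP => i; rewrite !inE mxE; apply: contra => /eqP ->; by rewrite mulr0.
Qed.

Lemma sparse_sub (R : realType) n q (z : 'cV[R]_n) (X : {set 'I_n}) :
  supp z \subset X -> (#|X| <= q)%N -> sparse q z.
Proof. by move=> h1 h2; rewrite /sparse (leq_trans (subset_leq_card h1)). Qed.

Lemma dot_mul (R : realType) m n (a : 'cV[R]_m) (A : 'M[R]_(m, n)) q :
  dot a (A *m q) = \sum_(j < n) (\sum_(r < m) a r 0 * A r j) * q j 0.
Proof.
rewrite /dot; under eq_bigr do rewrite mxE big_distrr.
rewrite exchange_big /=; apply: eq_bigr => j _; rewrite mulr_suml.
by apply: eq_bigr => r _; rewrite mulrA.
Qed.
Lemma zm1 (V : zmodType) (a b c d : V) : a + b + c - d = a - d + (b + c).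
Proof. by rewrite addrAC (addrAC a) -addrA. Qed.

Lemma zm2 (V : zmodType) (a b c d : V) : a + b + c - (a - d) = d + (b + c).
Proof. by rewrite -(addrA a b c) opprB [LHS]addrC addrA subrK. Qed.

Lemma tri3 (R : realType) n (a b c : 'cV[R]_n) :
  norm2 a <= norm2 (a + b + c) + norm2 b + norm2 c.
Proof.
have e : a = a + b + c - c - b by rewrite addrK addrK.
rewrite [X in norm2 X]e.
apply: le_trans (norm2D _ _) _; rewrite norm2N.
have := norm2D (a + b + c) (- c); rewrite norm2N; lra.
Qed.

Theorem lemma5 (R : realType) (m n k : nat) (A : 'M[R]_(m, n))
  (dk d2k : R) (x : 'cV[R]_n) (eta : 'cV[R]_m) (S : {set 'I_n})
  (u w what : 'cV[R]_n) (T T2 : {set 'I_n}) :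
  is_RIC A k dk -> is_RIC A (2 * k) d2k -> d2k < 1 ->
  is_Lk k x S ->
  is_argmin A (A *m x + eta) u k w ->
  is_Lk k (hadam u w) T ->
  is_Lk k (u - restr x S) T2 ->
  (forall i, what i 0 = 0 \/ what i 0 = 1) -> sparse k what ->
  S \subset supp what ->
  let eta' := A *m restr x (~: S) + eta in
  let S' := supp (Hk (hadam u w) T) in
  let e := restr x S - hadam u w in
  norm2 (restr e (S :|: S'))
    <= Num.sqrt ((1 + dk) / (1 - d2k)) * norm2 (hadam (restr x S - u) what)
       + 2 / Num.sqrt (1 - d2k) * norm2 eta'
       + 1 / Num.sqrt (1 - d2k) * norm2 (A *m restr e (~: (S :|: S')))
  /\
  norm2 (A *m restr e (~: (S :|: S')))
    <= 2 * Num.sqrt (1 + dk) * norm2 (Hk (u - restr x S) T2).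
Proof.
move=> [[dk0 hk] _] [[d2k0 h2k] _] d2k1 [cS hS] [[sw hw01] hopt] [cT hT] [cT2 hT2]
  hbin hsp hSsub eta' S' e.
have kn : (k <= n)%N.
  have : (k%:R : R) <= n%:R.
    rewrite -sw -[n in n%:R]card_ord -sumr_const; apply: ler_sum => i _.
    by case/andP: (hw01 i).
  by rewrite ler_nat.
have cSk : #|S| = k by rewrite cS; apply/minn_idPl.
have Ssupp : S = supp what.
  by apply/eqP; rewrite eqEcard hSsub /= cSk; exact: hsp.
have wbin1 : forall i, i \in S -> what i 0 = 1.
  by move=> i; rewrite Ssupp inE; case: (hbin i) => ->; rewrite ?eqxx.
have feas : feasible k what.
  split.
    rewrite (eq_bigr (fun i => if i \in supp what then 1 else 0)); last first.
      by move=> i _; rewrite inE; case: (hbin i) => ->; rewrite ?eqxx ?oner_eq0.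
    by rewrite -big_mkcond sumr_const -Ssupp cSk.
  by move=> i; case: (hbin i) => ->; rewrite ?lexx ?ler01.
have cS' : (#|S'| <= k)%N.
  by apply: leq_trans (subset_leq_card (supp_restr _ _)) _; rewrite cT; lia.
set O := S :|: S'.
set eO := restr e O; set eC := restr e (~: O).
set hh := hadam (restr x S - u) what.
have E1 : A *m x + eta - A *m hadam u w = A *m eO + A *m eC + eta'.
  rewrite -mulmxDr restr_split /e /eta' mulmxBr -{1}(restr_split x S) mulmxDr.
  by rewrite zm1 addrA.
have Hw : hadam u what = restr x S - hh.
  apply/matrixP => i j; rewrite (ord1 j) !mxE.
  case iS: (i \in S); last by ring.
  by rewrite (wbin1 _ iS); ring.
have E3 : A *m x + eta - A *m hadam u what = A *m hh + eta'.
  by rewrite Hw /eta' mulmxBr -{1}(restr_split x S) mulmxDr zm2.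
have spO : sparse (2 * k) eO.
  apply: (sparse_sub (supp_restr _ _)); rewrite cardsU; lia.
have sph : sparse k hh.
  by apply: (sparse_sub (supp_hadam _ _)); rewrite -Ssupp cSk.
have hN : Num.sqrt (1 - d2k) * norm2 eO <= norm2 (A *m eO).
  apply: ge_norm2; first lra.
  by case/andP: (h2k _ spO).
have hH : norm2 (A *m hh) <= Num.sqrt (1 + dk) * norm2 hh.
  apply: le_norm2; first lra.
  by case/andP: (hk _ sph).
have hL : norm2 (A *m x + eta - A *m hadam u w) <= norm2 (A *m hh + eta').
  by rewrite -E3; apply: le_norm2'; apply: hopt.
have hT3 := tri3 (A *m eO) (A *m eC) eta'.
rewrite -E1 in hT3.
have hD := norm2D (A *m hh) eta'.
split.
  set s := Num.sqrt (1 - d2k).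
  have s0 : 0 < s by rewrite sqrtr_gt0; lra.
  rewrite sqrtrM ?sqrtrV; try lra.
  rewrite -/s.
  set c := Num.sqrt (1 + dk).
  rewrite -(ler_pM2r s0).
  have -> : (c * s^-1 * norm2 hh + 2 / s * norm2 eta' + 1 / s * norm2 (A *m eC)) * s
     = c * norm2 hh + 2 * norm2 eta' + norm2 (A *m eC).
    by field; rewrite gt_eqF.
  rewrite [X in X <= _]mulrC.
  have hN' : s * norm2 eO <= norm2 (A *m eO) := hN.
  have hH' : norm2 (A *m hh) <= c * norm2 hh := hH.
  lra.
set D := ~: O.
have DS : forall j, j \in D -> j \notin S.
  by move=> j; rewrite !inE negb_or => /andP [].
have hz : forall j, eC j 0 = if j \in D then - (u j 0 * w j 0) else 0.
  move=> j; rewrite /eC /e !mxE; case jD: (j \in D) => //.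
  by rewrite (negbTE (DS _ jD)) sub0r.
pose g := fun j : 'I_n => \sum_(r < m) (A *m eC) r 0 * A r j.
have E4 : sqnorm (A *m eC) = \sum_(j in D) (- (g j * u j 0)) * w j 0.
  rewrite -dot_sq dot_mul [RHS]big_mkcond; apply: eq_bigr => j _.
  rewrite hz; case: (j \in D); rewrite /g; ring.
have sD : \sum_(j in D) w j 0 <= k%:R.
  rewrite -sw [X in X <= _]big_mkcond; apply: ler_sum => j _.
  by case: (j \in D) => //; case/andP: (hw01 j).
have [B [BD Bk hB]] := @linopt R _ (fun j => - (g j * u j 0)) (fun j => w j 0) D k hw01 sD.
have E5 : \sum_(j in B) - (g j * u j 0) = dot (A *m eC) (A *m (- restr u B)).
  rewrite dot_mul [LHS]big_mkcond; apply: eq_bigr => j _.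
  rewrite !mxE; case: (j \in B); rewrite /g; ring.
have hCS := CS (A *m eC) (A *m (- restr u B)).
have hAz : norm2 (A *m eC) <= norm2 (A *m restr u B).
  have h0 := norm2_ge0 (A *m eC); have h1 := norm2_ge0 (A *m restr u B).
  have : norm2 (A *m eC) ^+ 2 <= norm2 (A *m eC) * norm2 (A *m restr u B).
    rewrite norm2_sq E4; apply: le_trans hB _; rewrite E5; apply: le_trans hCS _.
    by rewrite mulmxN norm2N.
  nra.
have spB : sparse k (restr u B) by apply: (sparse_sub (supp_restr _ _)).
have hAB : norm2 (A *m restr u B) <= Num.sqrt (1 + dk) * norm2 (restr u B).
  apply: le_norm2; first lra.
  by case/andP: (hk _ spB).
have uv : restr u B = restr (u - restr x S) B.
  apply/matrixP => i j; rewrite (ord1 j) !mxE.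
  case iB: (i \in B) => //.
  by rewrite (negbTE (DS _ (subsetP BD _ iB))) subr0.
have hBT : norm2 (restr u B) <= norm2 (Hk (u - restr x S) T2).
  rewrite uv /Hk; apply: le_norm2'; rewrite !sqnorm_restr; apply: topk => //.
  rewrite cT2 leq_min Bk /=.
  by apply: leq_trans (max_card _) _; rewrite card_ord.
have c0 := sqrtr_ge0 (1 + dk).
have n0 := norm2_ge0 (Hk (u - restr x S) T2).
have := ler_wpM2l c0 hBT; nra.
Qed.
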